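(* Let $(s_n)$ be a sequence of nonnegative reals and $D\in\mathbb{N}\setminus\{0\}$ with $s_n\leq D$ for all $n$. Let $(\alpha_n)\subset\,]0,1[$, $(r_n),(v_n)\subset\mathbb{R}$, $(\gamma_n)\subset[0,\infty)$, and let ${\rm A}:\mathbb{N}\to\mathbb{N}$ be monotone with $\sum_{i=0}^{{\rm A}(k)}\alpha_i\geq k$ for all $k\in\mathbb{N}$. Let $k,n,p\in\mathbb{N}$ and assume (i) $\forall m\in[n,p]\ \big(v_m\leq\frac{1}{4(k+1)(p+1)}\ \wedge\ r_m\leq\frac{1}{4(k+1)}\big)$; (ii) $\forall m\in\mathbb{N}\ \big(\sum_{i=n}^{n+m}\gamma_i\leq\frac{1}{4(k+1)}\big)$; (iii) $\forall m\in\mathbb{N}\ \big(s_{m+1}\leq(1-\alpha_m)(s_m+v_m)+\alpha_m r_m+\gamma_m\big)$. Then $s_m\leq\frac{1}{k+1}$ for all $m\in[\sigma_1(k,n),p]$, where $\sigma_1(k,n):={\rm A}\big(n+\lceil\ln(4D(k+1))\rceil\big)+1$.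
   Context: A function $f:\mathbb{N}\to\mathbb{N}$ is monotone if $f(n)\leq f(n+1)$ for all $n$. $[a,b]$ denotes the set of natural numbers $m$ with $a\leq m\leq b$ (empty if $a>b$). *)

(* Defs.v *)
From Stdlib Require Import Reals Lra Lia ZArith.
Open Scope R_scope.

Definition floorR (x : R) : Z := Int_part x.
Definition ceilR (x : R) : Z := (- Int_part (- x))%Z.

Definition monotone_nat (f : nat -> nat) : Prop := forall n, (f n <= f (S n))%nat.

Definition sum_range (f : nat -> R) (a b : nat) : R := sum_f a b f.

Definition sigma1 (A : nat -> nat) (D : nat) (k n : nat) : nat :=
  (A (n + Z.to_nat (ceilR (ln (4 * INR D * (INR k + 1)))))%nat + 1)%nat.

(* Main.v *)
Require Import Defs.
From Stdlib Require Import Reals Lra Lia ZArith.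
Open Scope R_scope.

Fixpoint Pr (a : nat -> R) (n j : nat) : R :=
  match j with O => 1 | S j' => Pr a n j' * (1 - a (n + j')%nat) end.
Fixpoint Sm (a : nat -> R) (n j : nat) : R :=
  match j with O => 0 | S j' => Sm a n j' + a (n + j')%nat end.

Lemma Sm_sumf (g : nat -> R) n j : Sm g n (S j) = sum_f n (n + j) g.
Proof.
  unfold sum_f. replace (n + j - n)%nat with j by lia.
  induction j as [|j IH].
  - simpl. rewrite Nat.add_0_r. lra.
  - change (Sm g n (S (S j))) with (Sm g n (S j) + g (n + S j)%nat).
    rewrite IH. simpl. f_equal. f_equal. lia.
Qed.

Lemma Sm_add a n j : Sm a 0 (n + j) = Sm a 0 n + Sm a n j.
Proof.
  induction j as [|j IH]; simpl.
  - rewrite Nat.add_0_r; lra.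
  - rewrite Nat.add_succ_r. simpl. rewrite IH. lra.
Qed.

Lemma Sm_le a n j : (forall m, 0 < a m < 1) -> Sm a n j <= INR j.
Proof.
  intro H. induction j; cbn [Sm]; [simpl; lra|]. rewrite S_INR. specialize (H (n+j)%nat). lra.
Qed.

Lemma Sm_mono a n j j' : (forall m, 0 < a m < 1) -> (j <= j')%nat -> Sm a n j <= Sm a n j'.
Proof.
  intros H Hj. induction Hj; [lra|]. simpl. specialize (H (n+m)%nat). lra.
Qed.

Lemma Pr_exp a n j : (forall m, 0 < a m < 1) -> 0 <= Pr a n j <= exp (- Sm a n j).
Proof.
  intro H. induction j; simpl.
  - rewrite Ropp_0, exp_0. lra.
  - specialize (H (n+j)%nat). pose proof (exp_ineq1_le (- a (n+j)%nat)).
    replace (- (Sm a n j + a (n + j)%nat)) with (- Sm a n j + - a (n+j)%nat) by ring.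
    rewrite exp_plus. split.
    + apply Rmult_le_pos; lra.
    + apply Rmult_le_compat; lra.
Qed.

Lemma IZR_to_nat z : IZR z <= INR (Z.to_nat z).
Proof.
  destruct (Z_le_gt_dec 0 z).
  - rewrite INR_IZR_INZ, Z2Nat.id; lra || lia.
  - pose proof (pos_INR (Z.to_nat z)). assert (IZR z < 0) by (apply IZR_lt; lia). lra.
Qed.

Theorem mainTheorem5
  (s : nat -> R) (D : nat)
  (alpha r v gamma : nat -> R) (A : nat -> nat)
  (k n p : nat)
  (Hs_nonneg : forall m, 0 <= s m)
  (HD : (D <> 0)%nat)
  (Hs_bound : forall m, s m <= INR D)
  (Halpha : forall m, 0 < alpha m < 1)
  (Hgamma : forall m, 0 <= gamma m)
  (HA_mono : monotone_nat A)
  (HA_rate : forall kk, sum_range alpha 0 (A kk) >= INR kk)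
  (Hi : forall m, (n <= m <= p)%nat ->
          v m <= 1 / (4 * (INR k + 1) * (INR p + 1)) /\ r m <= 1 / (4 * (INR k + 1)))
  (Hii : forall m, sum_range gamma n (n + m) <= 1 / (4 * (INR k + 1)))
  (Hiii : forall m,
          s (S m) <= (1 - alpha m) * (s m + v m) + alpha m * r m + gamma m) :
  forall m, (sigma1 A D k n <= m <= p)%nat -> s m <= 1 / (INR k + 1).
Proof.
  intros m Hm.
  set (eps := 1 / (4 * (INR k + 1))).
  set (w := 1 / (4 * (INR k + 1) * (INR p + 1))).
  pose proof (pos_INR k) as Hk. pose proof (pos_INR p) as Hp.
  assert (Heps : 0 < eps) by (unfold eps; apply Rdiv_lt_0_compat; lra).
  assert (Hw : 0 < w) by (unfold w; apply Rdiv_lt_0_compat; nra).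
  set (u := fun m => Rmax (s m - eps) 0).
  assert (Hstep : forall m, (n <= m <= p)%nat ->
            u (S m) <= (1 - alpha m) * u m + w + gamma m).
  { intros q Hq. destruct (Hi q Hq) as [Hv Hr]. fold w eps in Hv, Hr.
    pose proof (Halpha q). pose proof (Hgamma q). pose proof (Hiii q).
    assert (Hu0 : 0 <= u q) by (unfold u; apply Rmax_r).
    assert (Hu1 : s q - eps <= u q) by (unfold u; apply Rmax_l).
    assert ((1 - alpha q) * v q <= w).
    { destruct (Rle_dec (v q) 0). nra. nra. }
    assert (alpha q * r q <= alpha q * eps) by (apply Rmult_le_compat_l; lra).
    unfold u at 1. apply Rmax_lub; nra. }
  assert (Hmain : forall j, (n + j <= p)%nat ->
            u (n + j)%nat <= Pr alpha n j * INR D + INR j * w + Sm gamma n j).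
  { induction j as [|j IH]; intro Hj.
    - simpl. rewrite Nat.add_0_r. unfold u. apply Rmax_lub.
      + pose proof (Hs_bound n). lra.
      + pose proof (pos_INR D). lra.
    - rewrite Nat.add_succ_r. specialize (IH ltac:(lia)).
      pose proof (Hstep (n+j)%nat ltac:(lia)).
      pose proof (Halpha (n+j)%nat). pose proof (Hgamma (n+j)%nat).
      assert (0 <= Sm gamma n j).
      { clear -Hgamma. induction j; simpl; [lra|]. specialize (Hgamma (n+j)%nat). lra. }
      pose proof (pos_INR j). pose proof (pos_INR D).
      cbn [Pr Sm]. rewrite S_INR.
      assert (0 <= Pr alpha n j) by (apply Pr_exp; auto).
      assert (Hq : (1 - alpha (n+j)%nat) * u (n + j)%nat <=
        (1 - alpha (n+j)%nat) * (Pr alpha n j * INR D + INR j * w + Sm gamma n j))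
        by (apply Rmult_le_compat_l; lra).
      assert (0 <= INR j * w + Sm gamma n j) by nra.
      assert (alpha (n+j)%nat * (INR j * w + Sm gamma n j) >= 0) by nra.
      nra. }
  set (K := Z.to_nat (ceilR (ln (4 * INR D * (INR k + 1))))).
  assert (HDpos : 1 <= INR D) by (apply (le_INR 1); lia).
  assert (HX : 0 < 4 * INR D * (INR k + 1)) by nra.
  assert (HK : ln (4 * INR D * (INR k + 1)) <= INR K).
  { unfold K. eapply Rle_trans; [|apply IZR_to_nat]. unfold ceilR.
    rewrite opp_IZR. destruct (base_Int_part (- ln (4 * INR D * (INR k + 1)))). lra. }
  assert (Hsr : forall N, sum_range alpha 0 N = Sm alpha 0 (S N)).
  { intro N. rewrite (Sm_sumf alpha 0 N). reflexivity. }
  unfold sigma1 in Hm. fold K in Hm.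
  specialize (HA_rate (n + K)%nat). rewrite Hsr in HA_rate.
  assert (Hmono : Sm alpha 0 (S (A (n + K)%nat)) <= Sm alpha 0 m)
    by (apply Sm_mono; auto; lia).
  assert (Hnm : (n <= m)%nat).
  { pose proof (Sm_le alpha 0 m Halpha). rewrite plus_INR in HA_rate.
    pose proof (pos_INR K). apply INR_le. lra. }
  replace m with (n + (m - n))%nat in * by lia.
  set (j := (m - n)%nat) in *.
  rewrite Sm_add in Hmono.
  pose proof (Sm_le alpha 0 n Halpha). rewrite plus_INR in HA_rate.
  assert (HT : INR K <= Sm alpha n j) by lra.
  destruct (Pr_exp alpha n j Halpha) as [HP0 HP1].
  assert (HPe : Pr alpha n j <= / (4 * INR D * (INR k + 1))).
  { eapply Rle_trans; [apply HP1|]. rewrite <- (exp_ln _ HX), <- exp_Ropp.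
    destruct (Rle_lt_or_eq_dec (- Sm alpha n j) (- ln (4 * INR D * (INR k + 1)))) as [Hl|Hl]; [lra|apply Rlt_le, exp_increasing; exact Hl|rewrite Hl; lra]. }
  assert (HPD : Pr alpha n j * INR D <= eps).
  { unfold eps.
    replace (/ (4 * INR D * (INR k + 1))) with (1 / (4 * (INR k + 1)) * / INR D) in HPe
      by (field; lra).
    apply Rmult_le_compat_r with (r := INR D) in HPe; [|lra].
    replace (1 / (4 * (INR k + 1)) * / INR D * INR D) with (1/(4*(INR k+1))) in HPe
      by (field; lra).
    lra. }
  assert (Hjw : INR j * w <= eps).
  { assert (INR j <= INR p + 1) by (rewrite <- S_INR; apply le_INR; lia).
    unfold w, eps. apply Rmult_le_reg_r with (4 * (INR k + 1) * (INR p + 1)); [nra|].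
    replace (INR j * (1 / (4 * (INR k + 1) * (INR p + 1))) * (4 * (INR k + 1) * (INR p + 1)))
      with (INR j) by (field; lra).
    replace (1 / (4 * (INR k + 1)) * (4 * (INR k + 1) * (INR p + 1))) with (INR p + 1)
      by (field; lra). lra. }
  assert (HG : Sm gamma n j <= eps).
  { destruct j as [|jj]; [simpl; lra|]. rewrite Sm_sumf. apply Hii. }
  pose proof (Hmain j ltac:(lia)).
  assert (s (n + j)%nat - eps <= u (n + j)%nat) by (unfold u; apply Rmax_l).
  replace (1 / (INR k + 1)) with (4 * eps) by (unfold eps; field; lra).
  lra.
Qed.
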